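(* Let $\mathcal{M} = (S, A, T, D, R, \gamma)$ be a Markov decision process with finite state set $S$, finite action set $A$, transition probabilities $T_{s,a}(s')$, initial-state distribution $D$, discount factor $\gamma \in (0,1)$, and reward $R(s) = \langle w^*, \phi(s)\rangle$ for a feature map $\phi\colon S \to \mathbb{R}^k$ and a unit vector $w^* \in \mathbb{R}^k$. Let $A^L\colon \mathbb{R}^k \to \mathbb{R}^\ell$ be a linear map (the learner's worldview), and let $\pi^T, \pi^L$ be two policies. Suppose that $\Vert A^L(\mu(\pi^T) - \mu(\pi^L))\Vert < \varepsilon$. Then \[ \vert \langle w^*, \mu(\pi^T) - \mu(\pi^L)\rangle \vert < \frac{\varepsilon}{\sigma(A^L)} + \rho(A^L; w^* ) \cdot \operatorname{diam} \mu(\Pi), \] where $\sigma(A^L) = \min_{v \perp \ker A^L,\ \Vert v \Vert = 1} \Vert A^L v\Vert$.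
   Context: A policy $\pi$ is a family of probability distributions $\pi_s$ on $A$ indexed by $s \in S$; $\Pi$ denotes the set of all policies. For a policy $\pi$, $\mu(\pi) = \mathbb{E}\left(\sum_{t=0}^\infty \gamma^t \phi(s_t)\right) \in \mathbb{R}^k$ is its vector of discounted feature expectations, the expectation taken over trajectories $(s_0, s_1, \dots)$ with $s_0 \sim D$, actions drawn from $\pi$ and transitions from $T$. $\operatorname{diam}\mu(\Pi) = \sup_{\mu_0,\mu_1 \in \mu(\Pi)} \Vert \mu_0 - \mu_1\Vert$, with $\Vert\cdot\Vert$ the Euclidean norm. $\ker A^L = \{v \in \mathbb{R}^k : A^L v = 0\}$. The teaching risk is $\rho(A^L; w^* ) := \max_{v \in \ker A^L,\ \Vert v \Vert \le 1} \langle w^*, v\rangle$ (equivalently, the norm of the orthogonal projection of $w^*$ onto $\ker A^L$). *)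

(* Defs.v *)
From HB Require Import structures.
From mathcomp Require Import all_boot all_order all_algebra.
From mathcomp Require Import all_classical all_reals.
From mathcomp Require Import topology normedtype sequences.
Set Implicit Arguments. Unset Strict Implicit. Unset Printing Implicit Defensive.
Import Order.TTheory GRing.Theory Num.Theory numFieldNormedType.Exports.
Local Open Scope ring_scope.
Local Open Scope classical_set_scope.

Section MDPDefs.
Variable R : realType.

Definition is_dist (X : finType) (f : X -> R) : Prop :=
  (forall x, 0 <= f x) /\ \sum_x f x = 1.

Definition is_policy (S A : finType) (pi : S -> A -> R) : Prop :=
  forall s, is_dist (pi s).

Definition dotv (k : nat) (u v : 'rV[R]_k) : R := \sum_(i < k) u 0 i * v 0 i.
Definition enorm (k : nat) (v : 'rV[R]_k) : R := Num.sqrt (dotv v v).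

(* law of s_t: s_0 ~ D, a_t ~ pi_{s_t}, s_{t+1} ~ T_{s_t,a_t} *)
Fixpoint state_dist (S A : finType) (T : S -> A -> S -> R) (D : S -> R)
    (pi : S -> A -> R) (t : nat) : S -> R :=
  match t with
  | 0 => D
  | t'.+1 => fun s' =>
      \sum_s state_dist T D pi t' s * \sum_a pi s a * T s a s'
  end.

Definition feat_exp (S A : finType) (k : nat) (T : S -> A -> S -> R) (D : S -> R)
    (gamma : R) (phi : S -> 'rV[R]_k) (pi : S -> A -> R) : 'rV[R]_k :=
  \row_(i < k) limn (fun n : nat => \sum_(0 <= t < n)
      (gamma ^+ t * \sum_s state_dist T D pi t s * phi s 0 i)).

Definition diam_mu (S A : finType) (k : nat) (T : S -> A -> S -> R) (D : S -> R)
    (gamma : R) (phi : S -> 'rV[R]_k) : R :=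
  sup [set x : R | exists pi0 pi1 : S -> A -> R,
         [/\ is_policy pi0, is_policy pi1 &
             x = enorm (feat_exp T D gamma phi pi0 - feat_exp T D gamma phi pi1)]].

(* the linear map A^L : R^k -> R^l is v |-> v *m AL *)
Definition in_ker (k l : nat) (AL : 'M[R]_(k, l)) (v : 'rV[R]_k) : Prop :=
  v *m AL = 0.

Definition sigmaA (k l : nat) (AL : 'M[R]_(k, l)) : R :=
  inf [set x : R | exists v : 'rV[R]_k,
         [/\ (forall u, in_ker AL u -> dotv v u = 0), enorm v = 1 &
             x = enorm (v *m AL)]].

Definition teaching_risk (k l : nat) (AL : 'M[R]_(k, l)) (w : 'rV[R]_k) : R :=
  sup [set x : R | exists v : 'rV[R]_k,
         [/\ in_ker AL v, enorm v <= 1 & x = dotv w v]].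

End MDPDefs.

(* Main.v *)
Require Import Defs.
From HB Require Import structures.
From mathcomp Require Import all_boot all_order all_algebra.
From mathcomp Require Import all_classical all_reals.
From mathcomp Require Import topology normedtype sequences.
From mathcomp Require Import ring lra zify.
Set Implicit Arguments. Unset Strict Implicit. Unset Printing Implicit Defensive.
Import Order.TTheory GRing.Theory Num.Theory numFieldNormedType.Exports.
Local Open Scope ring_scope.

Section LA.
Variable R : realType.
Implicit Types k l : nat.

Lemma dotvE k (u v : 'rV[R]_k) : dotv u v = (u *m v^T) 0 0.
Proof. by rewrite /dotv !mxE; apply: eq_bigr => i _; rewrite !mxE. Qed.

Lemma dotvC k (u v : 'rV[R]_k) : dotv u v = dotv v u.
Proof. by rewrite /dotv; apply: eq_bigr => i _; rewrite mulrC. Qed.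

Lemma dotvDl k (u v w : 'rV[R]_k) : dotv (u + v) w = dotv u w + dotv v w.
Proof. by rewrite /dotv -big_split; apply: eq_bigr => i _; rewrite !mxE mulrDl. Qed.

Lemma dotvZl k (c : R) (u w : 'rV[R]_k) : dotv (c *: u) w = c * dotv u w.
Proof. by rewrite /dotv mulr_sumr; apply: eq_bigr => i _; rewrite !mxE mulrA. Qed.

Lemma dotvNl k (u w : 'rV[R]_k) : dotv (- u) w = - dotv u w.
Proof. by rewrite -scaleN1r dotvZl mulN1r. Qed.

Lemma dotvBl k (u v w : 'rV[R]_k) : dotv (u - v) w = dotv u w - dotv v w.
Proof. by rewrite dotvDl dotvNl. Qed.

Lemma dotvDr k (u v w : 'rV[R]_k) : dotv w (u + v) = dotv w u + dotv w v.
Proof. by rewrite dotvC dotvDl !(dotvC w). Qed.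
Lemma dotvZr k (c : R) (u w : 'rV[R]_k) : dotv w (c *: u) = c * dotv w u.
Proof. by rewrite dotvC dotvZl dotvC. Qed.
Lemma dotvNr k (u w : 'rV[R]_k) : dotv w (- u) = - dotv w u.
Proof. by rewrite dotvC dotvNl dotvC. Qed.
Lemma dotvBr k (u v w : 'rV[R]_k) : dotv w (u - v) = dotv w u - dotv w v.
Proof. by rewrite dotvDr dotvNr. Qed.
Lemma dotv0l k (w : 'rV[R]_k) : dotv 0 w = 0.
Proof. by rewrite /dotv big1 // => i _; rewrite mxE mul0r. Qed.
Lemma dotv0r k (w : 'rV[R]_k) : dotv w 0 = 0.
Proof. by rewrite dotvC dotv0l. Qed.

Lemma dotv_ge0 k (v : 'rV[R]_k) : 0 <= dotv v v.
Proof. by apply: sumr_ge0 => i _; rewrite -expr2 sqr_ge0. Qed.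

Lemma dotv_eq0 k (v : 'rV[R]_k) : dotv v v = 0 -> v = 0.
Proof.
move=> /eqP; rewrite /dotv psumr_eq0 => [/allP H|i _]; last by rewrite -expr2 sqr_ge0.
apply/rowP => i; rewrite mxE; have := H i (mem_index_enum i).
by rewrite -expr2 sqrf_eq0 => /eqP.
Qed.

Lemma enorm_ge0 k (v : 'rV[R]_k) : 0 <= enorm v.
Proof. exact: sqrtr_ge0. Qed.

Lemma enorm_sq k (v : 'rV[R]_k) : enorm v ^+ 2 = dotv v v.
Proof. by rewrite /enorm sqr_sqrtr // dotv_ge0. Qed.

Lemma enorm0 k : enorm (0 : 'rV[R]_k) = 0.
Proof. by rewrite /enorm dotv0l sqrtr0. Qed.

Lemma enorm_eq0 k (v : 'rV[R]_k) : enorm v = 0 -> v = 0.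
Proof. by move=> h; apply: dotv_eq0; rewrite -enorm_sq h expr0n. Qed.

Lemma enormZ k (c : R) (v : 'rV[R]_k) : enorm (c *: v) = `|c| * enorm v.
Proof.
rewrite /enorm dotvZl dotvZr mulrA -expr2 sqrtrM ?sqr_ge0 //.
by rewrite sqrtr_sqr.
Qed.

Lemma CS k (u v : 'rV[R]_k) : dotv u v ^+ 2 <= dotv u u * dotv v v.
Proof.
have [u0|] := eqVneq (dotv u u) 0.
  by rewrite (dotv_eq0 u0) !dotv0l expr0n /= mul0r.
move=> nz; have pos : 0 < dotv u u by rewrite lt_def nz dotv_ge0.
set t := dotv u v / dotv u u.
have := dotv_ge0 (v - t *: u).
rewrite dotvBl !dotvBr !dotvZl !dotvZr (dotvC v u).
move=> h.
have e : dotv u u * (dotv v v - t * dotv u v - (t * dotv u v - t * (t * dotv u u)))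
  = dotv u u * dotv v v - dotv u v ^+ 2.
  rewrite /t; field; exact: nz.
rewrite -subr_ge0 -e; apply: mulr_ge0 => //; exact: ltW.
Qed.

Lemma CSabs k (u v : 'rV[R]_k) : `|dotv u v| <= enorm u * enorm v.
Proof.
rewrite -(ler_pXn2r (isT : (0 < 2)%N)) ?nnegrE ?mulr_ge0 ?enorm_ge0 //.
by rewrite real_normK ?num_real // exprMn !enorm_sq CS.
Qed.

Lemma pythag k (p q : 'rV[R]_k) : dotv p q = 0 ->
  enorm (p + q) ^+ 2 = enorm p ^+ 2 + enorm q ^+ 2.
Proof.
move=> h; rewrite !enorm_sq dotvDl !dotvDr h (dotvC q p) h; lra.
Qed.


Section Proj.
Variables (k l : nat) (A : 'M[R]_(k, l)).

Lemma ker_AtA (y : 'rV[R]_l) : y *m (A^T *m A) = 0 -> y *m A^T = 0.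
Proof.
move=> h; apply: dotv_eq0; rewrite dotvE trmx_mul trmxK mulmxA.
by rewrite -(mulmxA y) h mul0mx mxE.
Qed.

Lemma rank_AtA : \rank (A^T *m A) = \rank A.
Proof.
have s1 : (kermx (A^T *m A) <= kermx A^T)%MS.
  apply/sub_kermxP/row_matrixP => i; rewrite row0 row_mul; apply: ker_AtA.
  rewrite -row_mul; have /sub_kermxP -> := submx_refl (kermx (A^T *m A)).
  by rewrite row0.
have s2 : (kermx A^T <= kermx (A^T *m A))%MS.
  apply/sub_kermxP; rewrite mulmxA; have /sub_kermxP -> := submx_refl (kermx A^T).
  by rewrite mul0mx.
have e : \rank (kermx (A^T *m A)) = \rank (kermx A^T).
  by apply/eqP; rewrite eqn_leq !mxrankS.
rewrite !mxrank_ker in e.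
have r1 := rank_leq_row (A^T *m A); have r2 := rank_leq_row A^T.
rewrite -(mxrank_tr A).
by rewrite -(subKn r1) e subKn.
Qed.

Lemma A_sub_AtA : (A <= A^T *m A)%MS.
Proof.
have := (mxrank_leqif_eq (submxMl A^T A)).2; rewrite rank_AtA eqxx.
by move/esym => /andP[].
Qed.

Definition PM := pinvmx (A^T *m A) *m A^T.

Lemma PM_A (d : 'rV[R]_k) : d *m A *m PM *m A = d *m A.
Proof.
have h := mulmxKpV (submx_trans (submxMl d A) A_sub_AtA).
rewrite /PM !mulmxA; rewrite !mulmxA in h; exact: h.
Qed.

Lemma PM_orth (x : 'rV[R]_l) (u : 'rV[R]_k) : u *m A = 0 -> dotv (x *m PM) u = 0.
Proof.
move=> h; rewrite dotvE /PM -!mulmxA -trmx_mul h trmx0 !mulmx0 mxE; done.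
Qed.

Lemma perp_fix (v : 'rV[R]_k) : (forall u, in_ker A u -> dotv v u = 0) ->
  v = v *m A *m PM.
Proof.
move=> hv; set p := v *m A *m PM.
have hq : in_ker A (v - p) by rewrite /in_ker mulmxBl PM_A subrr.
have h1 := hv _ hq; have h2 : dotv p (v - p) = 0 by apply: PM_orth.
apply/eqP; rewrite -subr_eq0; apply/eqP/dotv_eq0.
by rewrite dotvBl h1 h2 subrr.
Qed.

Lemma frob (x : 'rV[R]_l) (M : 'M[R]_(l, k)) :
  enorm (x *m M) <= enorm x * Num.sqrt (\sum_(j < k) dotv (row j M^T) (row j M^T)).
Proof.
have F0 : 0 <= \sum_(j < k) dotv (row j M^T) (row j M^T).
  by apply: sumr_ge0 => j _; apply: dotv_ge0.
rewrite -(ler_pXn2r (isT : (0 < 2)%N)) ?nnegrE ?mulr_ge0 ?enorm_ge0 ?sqrtr_ge0 //.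
rewrite exprMn (sqr_sqrtr F0). rewrite (enorm_sq x) (enorm_sq (x *m M)) mulr_sumr /dotv; apply: ler_sum => j _.
have -> : (x *m M) 0 j * (x *m M) 0 j = dotv x (row j M^T) ^+ 2.
  rewrite expr2 /dotv !mxE; congr (_ * _); apply: eq_bigr => i _; by rewrite !mxE.
exact: CS.
Qed.

End Proj.

Lemma enorm_normalize k (p : 'rV[R]_k) : p != 0 -> enorm ((enorm p)^-1 *: p) = 1.
Proof.
move=> hp; have n0 : enorm p != 0 by apply: contra hp => /eqP/enorm_eq0 ->.
rewrite enormZ ger0_norm ?invr_ge0 ?enorm_ge0 // mulVf //.
Qed.

Lemma enorm_l1 k (x : 'rV[R]_k) : enorm x <= \sum_i `|x 0 i|.
Proof.
have S0 : 0 <= \sum_i `|x 0 i| by apply: sumr_ge0.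
rewrite -(ler_pXn2r (isT : (0 < 2)%N)) ?nnegrE ?enorm_ge0 // enorm_sq /dotv.
rewrite [X in _ <= X]expr2 mulr_suml; apply: ler_sum => i _.
have -> : x 0 i * x 0 i = `|x 0 i| * `|x 0 i| by rewrite -normrM ger0_norm // -expr2 sqr_ge0.
apply: ler_wpM2l => //; rewrite (bigD1 i) //= lerDl sumr_ge0 //.
Qed.

Lemma rho_prop k l (AL : 'M[R]_(k, l)) (w : 'rV[R]_k) : enorm w = 1 ->
  0 <= teaching_risk AL w /\
  forall q, in_ker AL q -> `|dotv w q| <= teaching_risk AL w * enorm q.
Proof.
move=> hw.
have hs : has_sup [set x : R | exists v : 'rV[R]_k,
         [/\ in_ker AL v, enorm v <= 1 & x = dotv w v]].
  split; first by exists 0, 0; split; rewrite ?enorm0 ?dotv0r // /in_ker mul0mx.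
  exists 1 => x [v [_ hv ->]]; apply: le_trans (ler_norm _) _.
  by apply: le_trans (CSabs _ _) _; rewrite hw mul1r.
have ub := sup_upper_bound hs.
have r0 : 0 <= teaching_risk AL w.
  by apply: ub; exists 0; split; rewrite ?enorm0 ?dotv0r // /in_ker mul0mx.
split=> // q hq.
have [->|qn0] := eqVneq q 0; first by rewrite dotv0r enorm0 normr0 mulr0.
have n0 : 0 < enorm q by rewrite lt_def enorm_ge0 andbT; apply: contra qn0 => /eqP/enorm_eq0 ->.
have key : forall c : R, `|c| = 1 -> dotv w ((enorm q)^-1 *: (c *: q)) <= teaching_risk AL w.
  move=> c hc; apply: ub; exists ((enorm q)^-1 *: (c *: q)); split=> //.
    by rewrite /in_ker -!scalemxAl hq !scaler0.
  by rewrite !enormZ hc mul1r ger0_norm ?invr_ge0 ?enorm_ge0 // mulVf // gt_eqF.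
have k1 := key 1 (normr1 _); have k2 := key (-1) (ltac:(by rewrite normrN normr1)).
rewrite !dotvZr mul1r in k1; rewrite !dotvZr mulN1r in k2.
have hc : (enorm q)^-1 * enorm q = 1 by rewrite mulVf // gt_eqF.
move: k1 k2 hc n0; set c := (enorm q)^-1; set n := enorm q; set a := dotv w q.
move=> k1 k2 hc n0; rewrite ler_norml; apply/andP; split; clearbody c n a; move: (teaching_risk AL w) k1 k2 => r k1 k2.
  have e2 : c * - a * n = - a by rewrite mulrAC hc mul1r.
  by rewrite lerNl -e2 ler_wpM2r // ltW.
have e1 : c * a * n = a by rewrite mulrAC hc mul1r.
by rewrite -e1 ler_wpM2r // ltW.
Qed.
End LA.
Section MDP.
Variable R : realType.

Lemma le_sum_nneg (I : finType) (f : I -> R) i : (forall j, 0 <= f j) -> f i <= \sum_j f j.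
Proof. by move=> h; rewrite (bigD1 i) //= lerDl sumr_ge0. Qed.

Variables (S A : finType) (T : S -> A -> S -> R) (D : S -> R).
Hypothesis hT : forall s a, is_dist (T s a).
Hypothesis hD : is_dist D.

Lemma sd_dist (pi : S -> A -> R) : is_policy pi -> forall t, is_dist (state_dist T D pi t).
Proof.
move=> hpi; elim=> [|t [IH0 IH1]] //=; split.
  move=> s'; apply: sumr_ge0 => s _; apply: mulr_ge0 => //.
  apply: sumr_ge0 => a _; apply: mulr_ge0; [exact: (hpi s).1| exact: (hT s a).1].
rewrite exchange_big /=; rewrite -IH1; apply: eq_bigr => s _.
rewrite -mulr_sumr exchange_big /=.
have -> : \sum_a \sum_s' pi s a * T s a s' = 1.
  rewrite -(hpi s).2; apply: eq_bigr => a _; by rewrite -mulr_sumr (hT s a).2 mulr1.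
by rewrite mulr1.
Qed.

Lemma geom_bound (g : R) n : 0 < g < 1 -> \sum_(0 <= t < n) g ^+ t <= (1 - g)^-1.
Proof.
move=> /andP[g0 g1]; have h1 : 0 < 1 - g by rewrite subr_gt0.
rewrite big_mkord -(ler_pM2l h1) mulfV ?gt_eqF //.
have e : (1 - g) * \sum_(t < n) g ^+ t = 1 - g ^+ n.
  by rewrite -opprB mulNr -subrX1 opprB.
rewrite e lerBlDr lerDl exprn_ge0 //; exact: ltW.
Qed.

Variables (gamma : R) (k : nat) (phi : S -> 'rV[R]_k).
Hypothesis hg : 0 < gamma < 1.

Definition Bf (i : 'I_k) := (\sum_s `|phi s 0 i|) / (1 - gamma).

Lemma feat_bound (pi : S -> A -> R) i : is_policy pi ->
  `|feat_exp T D gamma phi pi 0 i| <= Bf i.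
Proof.
move=> hpi; rewrite mxE.
have g0 : 0 <= gamma by case/andP: hg => /ltW.
have hc : forall t, `|\sum_s state_dist T D pi t s * phi s 0 i| <= \sum_s `|phi s 0 i|.
  move=> t; have [h0 h1] := sd_dist hpi t.
  apply: le_trans (ler_norm_sum _ _ _) _; apply: ler_sum => s _.
  rewrite normrM ger0_norm // ler_piMl //.
  by rewrite -h1; apply: le_sum_nneg.
have hb : forall n, `|\sum_(0 <= t < n) (gamma ^+ t * \sum_s state_dist T D pi t s * phi s 0 i)| <= Bf i.
  move=> n; apply: le_trans (ler_norm_sum _ _ _) _.
  apply: (@le_trans _ _ (\sum_(0 <= t < n) gamma ^+ t * \sum_s `|phi s 0 i|)).
    apply: ler_sum => t _; rewrite normrM ger0_norm ?exprn_ge0 //.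
    by apply: ler_wpM2l; [rewrite exprn_ge0| exact: hc].
  rewrite -mulr_suml /Bf mulrC; apply: ler_wpM2l; first by apply: sumr_ge0.
  exact: geom_bound.
have [cv|ncv] := pselect (cvgn (fun n : nat => \sum_(0 <= t < n)
      (gamma ^+ t * \sum_s state_dist T D pi t s * phi s 0 i))).
  rewrite ler_norml; apply/andP; split.
    apply: limr_ge => //; apply: nearW => n; have := hb n; rewrite ler_norml.
    by case/andP.
  apply: limr_le => //; apply: nearW => n; have := hb n; rewrite ler_norml.
  by case/andP.
rewrite (dvgP ncv) normr0 /Bf; apply: divr_ge0; first by apply: sumr_ge0.
by case/andP: hg => _ h; rewrite subr_ge0 ltW.
Qed.

End MDP.

Theorem theorem1 (R : realType) (S A : finType) (k l : nat)
    (T : S -> A -> S -> R) (D : S -> R) (gamma : R)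
    (phi : S -> 'rV[R]_k) (w : 'rV[R]_k) (AL : 'M[R]_(k, l))
    (piT piL : S -> A -> R) (eps : R) :
  (forall s a, is_dist (T s a)) ->
  is_dist D ->
  0 < gamma < 1 ->
  enorm w = 1 ->
  AL != 0 ->
  is_policy piT -> is_policy piL ->
  enorm ((feat_exp T D gamma phi piT - feat_exp T D gamma phi piL) *m AL) < eps ->
  `| dotv w (feat_exp T D gamma phi piT - feat_exp T D gamma phi piL) |
    < eps / sigmaA AL + teaching_risk AL w * diam_mu T D gamma phi.
Proof.
move=> hT hD hg hw AL0 hpT hpL.
set d := feat_exp T D gamma phi piT - feat_exp T D gamma phi piL.
set x := d *m AL => hd.
have eps0 : 0 < eps := le_lt_trans (enorm_ge0 _) hd.
set F := Num.sqrt (\sum_(j < k) dotv (row j (PM AL)^T) (row j (PM AL)^T)).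
have F0 : 0 <= F := sqrtr_ge0 _.
have F1 : 0 < F + 1 by apply: ltr_wpDl.
have Fi : 0 < (F + 1)^-1 by rewrite invr_gt0.
have normp : forall p : 'rV[R]_k, p != 0 ->
    (forall u, in_ker AL u -> dotv p u = 0) ->
    let v := (enorm p)^-1 *: p in
    [/\ (forall u, in_ker AL u -> dotv v u = 0), enorm v = 1 &
        enorm (v *m AL) = (enorm p)^-1 * enorm (p *m AL)].
  move=> p hp hpo v; split.
  - by move=> u hu; rewrite /v dotvZl hpo // mulr0.
  - exact: enorm_normalize.
  - by rewrite /v -scalemxAl enormZ ger0_norm // invr_ge0 enorm_ge0.
set Es := [set y : R | exists v : 'rV[R]_k,
         [/\ (forall u, in_ker AL u -> dotv v u = 0), enorm v = 1 &
             y = enorm (v *m AL)]]%classic.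
have Es_lb : has_lbound Es by exists 0 => y [v [_ _ ->]]; apply: enorm_ge0.
have Es_c : forall y, Es y -> (F + 1)^-1 <= y.
  move=> y [v [hv hv1 ->]].
  have h := frob (v *m AL) (PM AL); rewrite -(perp_fix hv) hv1 -/F in h.
  have h2 : 1 <= enorm (v *m AL) * (F + 1).
    apply: le_trans h _; apply: ler_wpM2l; [exact: enorm_ge0| by rewrite lerDl].
  have e : (F + 1)^-1 * (F + 1) = 1 by rewrite mulVf // gt_eqF.
  have := ler_wpM2r (ltW Fi) h2.
  by rewrite -mulrA mulrV ?unitf_gt0 // mulr1 mul1r.
have Es_ne : (Es !=set0)%classic.
  have [i hi] : exists i, row i AL != 0.
    apply/existsP; apply: contraNT AL0 => /existsPn H.
    by apply/eqP/row_matrixP => i; rewrite row0; apply/eqP; have := H i; rewrite negbK.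
  pose p := (delta_mx 0 i : 'rV[R]_k) *m AL *m PM AL.
  have hpA : p *m AL = row i AL by rewrite /p PM_A rowE.
  have p0 : p != 0 by apply: contra hi => /eqP hp; rewrite -hpA hp mul0mx.
  have [h1 h2 _] := normp p p0 (fun u hu => PM_orth _ hu).
  by exists (enorm ((enorm p)^-1 *: p *m AL)), ((enorm p)^-1 *: p).
have sig0 : 0 < sigmaA AL.
  apply: lt_le_trans Fi _.
  by apply: lb_le_inf => // y /Es_c.
set p := x *m PM AL.
set q := d - p.
have hq : in_ker AL q by rewrite /in_ker /q mulmxBl PM_A subrr.
have hpq : dotv p q = 0 by apply: PM_orth.
have dpq : d = p + q by rewrite /q addrC subrK.
have part1 : `|dotv w p| < eps / sigmaA AL.
  have [->|p0] := eqVneq p 0.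
    by rewrite dotv0r normr0 divr_gt0.
  have [h1 h2 h3] := normp p p0 (fun u hu => PM_orth _ hu).
  have hs : sigmaA AL <= (enorm p)^-1 * enorm (p *m AL).
    by rewrite -h3; apply: ge_inf => //; exists ((enorm p)^-1 *: p).
  have pA : p *m AL = x by rewrite /p PM_A.
  rewrite pA in hs.
  have np : 0 < enorm p.
    by rewrite lt_def enorm_ge0 andbT; apply: contra p0 => /eqP/enorm_eq0 ->.
  apply: le_lt_trans (CSabs _ _) _; rewrite hw mul1r.
  rewrite ltr_pdivlMr //.
  have := ler_wpM2l (ltW np) hs.
  rewrite mulrA mulrV ?unitf_gt0 // mul1r => h.
  by apply: le_lt_trans h hd.
have [r0 rq] := rho_prop AL hw.
have qd : enorm q <= enorm d.
  rewrite -(ler_pXn2r (isT : (0 < 2)%N)) ?nnegrE ?enorm_ge0 //.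
  have e := pythag hpq; rewrite -dpq in e; by rewrite e lerDr sqr_ge0.
have dd : enorm d <= diam_mu T D gamma phi.
  apply: sup_upper_bound; last by exists piT, piL.
  split; first by exists (enorm d), piT, piL.
  exists (\sum_i (Bf gamma phi i + Bf gamma phi i)) => y [p0 [p1 [h0 h1 ->]]].
  apply: le_trans (enorm_l1 _) _; apply: ler_sum => i _.
  have b0 := feat_bound hT hD phi hg i h0; have b1 := feat_bound hT hD phi hg i h1.
  rewrite !mxE in b0 b1 *; apply: le_trans (ler_normB _ _) _.
  exact: lerD.
have part2 : `|dotv w q| <= teaching_risk AL w * diam_mu T D gamma phi.
  apply: le_trans (rq _ hq) _; apply: ler_wpM2l => //; exact: le_trans qd dd.
rewrite dpq dotvDr; apply: le_lt_trans (ler_normD _ _) _.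
by apply: ltr_leD.
Qed.
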